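(* Fix an integer $r\ge 2$. For integers $n\ge 1$ and $L\ge 0$ let $$G_2(n,r,L)=\frac{2^{r+1}-1}{2^{r}-1}\left(2^{rL}-1\right)+M_r\!\left(\lfloor n/2^{L}\rfloor\right)-r-1,$$ where $M_r(k)=\binom{k+r}{r}$. Let $L_{op}=L_{op}(n)$ be a value of $L\ge 0$ minimizing $G_2(n,r,L)$, and put $$L^*(n)=\frac{1}{2r}\log_2\frac{2^r-1}{r!\,(2^{r+1}-1)}+\frac{\log_2 n}{2},\qquad K_r=\sqrt{4\,\frac{2^{r+1}-1}{2^r-1}\,\frac{1}{r!}} .$$ Then, asymptotically as $n\to\infty$, $L_{op}$ lies in the interval $[L^*(n)-\tfrac12,\;L^*(n)+\tfrac12]$ up to an error tending to $0$ (i.e. $L^*(n)-\tfrac12-\delta_n\le L_{op}\le L^*(n)+\tfrac12+\delta_n$ with $\delta_n\to 0$), so $L_{op}$ is the integer closest to $L^*(n)$; and for all sufficiently large $n$, $$\frac{1}{\sqrt{2^r}}\,K_r\, n^{r/2}\;<\;G_2(n,r,L_{op})\;<\;\sqrt{2^r}\,K_r\, n^{r/2}.$$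
   Context: $\lfloor x\rfloor$ denotes the integer part of $x$; $M_r(k)=\binom{k+r}{r}$ is the number of monomials of degree at most $k$ in $r$ variables. Interpretation (not needed for the claim): $G_2(n,r,L)$ counts the field multiplications used to evaluate a degree-$n$ polynomial in $\mathbb{F}_2[x_1,\dots,x_r]$ at a point of $\mathbb{F}_{2^m}^r$ by applying $L$ times the decomposition $P=\sum_{i_1,\dots,i_r\in\{0,1\}}x_1^{i_1}\cdots x_r^{i_r}\,P_{i_1,\dots,i_r}(x_1,\dots,x_r)^2$ and evaluating all monomials of degree at most $\lfloor n/2^L\rfloor$ directly. *)

(* Defs.v *)
From Stdlib Require Import Reals Arith.
Open Scope R_scope.

(* M_r(k) = binom(k+r, r) : number of monomials of degree <= k in r variables *)
Definition M (r k : nat) : R := Binomial.C (k + r) r.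

Definition log2 (x : R) : R := ln x / ln 2.

Definition G2 (n r L : nat) : R :=
  (2 ^ (r + 1) - 1) / (2 ^ r - 1) * (2 ^ (r * L) - 1)
  + M r (Nat.div n (2 ^ L)) - INR r - 1.

Definition is_Lop (n r L : nat) : Prop := forall L' : nat, G2 n r L <= G2 n r L'.

Definition Lstar (r n : nat) : R :=
  / (2 * INR r) * log2 ((2 ^ r - 1) / (INR (fact r) * (2 ^ (r + 1) - 1)))
  + log2 (INR n) / 2.

Definition K (r : nat) : R :=
  sqrt (4 * ((2 ^ (r + 1) - 1) / (2 ^ r - 1)) * / INR (fact r)).

(* Main.v *)
Require Import Defs.
From Stdlib Require Import Reals Arith Lra Lia Psatz ZArith.
Open Scope R_scope.

Lemma fact_bounds (k r : nat) :
  (fact k * k ^ r <= fact (k + r) <= fact k * (k + r) ^ r)%nat.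
Proof.
  induction r as [|r IH].
  - rewrite Nat.add_0_r; simpl; lia.
  - replace (k + S r)%nat with (S (k + r)) by lia.
    destruct IH as [IH1 IH2]. split.
    + rewrite Nat.pow_succ_r'. change (fact (S (k + r))) with (S (k + r) * fact (k + r))%nat. nia.
    + rewrite Nat.pow_succ_r'.
      assert ((k + r) ^ r <= (S (k + r)) ^ r)%nat by (apply Nat.pow_le_mono_l; lia).
      change (fact (S (k + r))) with (S (k + r) * fact (k + r))%nat.
      apply Nat.le_trans with (S (k + r) * (fact k * (k + r) ^ r))%nat.
      * apply Nat.mul_le_mono_l; exact IH2.
      * replace (fact (k) * (S (k + r) * S (k + r) ^ r))%nat with
          (S (k + r) * (fact k * S (k + r) ^ r))%nat by ring.
        apply Nat.mul_le_mono_l. apply Nat.mul_le_mono_l. exact H.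
Qed.

Lemma exp_pow (x : R) (n : nat) : exp x ^ n = exp (INR n * x).
Proof.
  induction n as [|n IH]; simpl.
  - rewrite Rmult_0_l, exp_0; ring.
  - rewrite IH, <- exp_plus. f_equal. destruct n; simpl; ring.
Qed.

Lemma bern_low (x : R) (n : nat) : 0 <= x <= 1 -> 1 - INR n * x <= (1 - x) ^ n.
Proof.
  intros Hx. induction n as [|n IH]; [simpl; lra|].
  rewrite S_INR; simpl. assert (0 <= (1-x)^n) by (apply pow_le; lra).
  assert (0 <= INR n) by apply pos_INR. nra.
Qed.

Lemma bern_up (x : R) (n : nat) : 0 <= x -> INR n * x <= 1 ->
  (1 + x) ^ n <= 1 + INR n * x * 2 ^ n.
Proof.
  intros Hx. induction n as [|n IH]; intros H; [simpl; lra|].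
  rewrite S_INR in *; simpl. assert (0 <= INR n) by apply pos_INR.
  assert (IH' : (1 + x) ^ n <= 1 + INR n * x * 2 ^ n) by (apply IH; nra).
  assert (1 <= 2 ^ n) by (apply pow_R1_Rle; lra).
  assert (INR n * x <= 1) by nra.
  assert (0 <= 1 + x) by lra.
  assert ((1 + x) * (1 + x) ^ n <= (1 + x) * (1 + INR n * x * 2 ^ n)) by (apply Rmult_le_compat_l; lra).
  assert (x * (INR n * x) * 2 ^ n <= x * 2 ^ n).
  { assert (0 <= x * 2^n) by nra. nra. }
  assert (x <= x * 2 ^ n) by nra.
  replace ((INR n + 1) * x * (2 * 2 ^ n)) with (2 * (INR n * x * 2^n) + 2 * (x * 2^n)) by ring.
  replace ((1 + x) * (1 + INR n * x * 2 ^ n)) with (1 + x + INR n * x * 2^n + x * (INR n * x) * 2^n) in H4 by ring.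
  assert (0 <= INR n * x * 2^n) by (apply Rmult_le_pos; nra).
  lra.
Qed.

Lemma M_bounds (r q : nat) :
  INR q ^ r <= INR (fact r) * Binomial.C (q + r) r <= (INR q + INR r) ^ r.
Proof.
  unfold Binomial.C. replace (q + r - r)%nat with q by lia.
  assert (Hr : 0 < INR (fact r)) by (apply lt_0_INR, lt_O_fact).
  assert (Hq : 0 < INR (fact q)) by (apply lt_0_INR, lt_O_fact).
  replace (INR (fact r) * (INR (fact (q + r)) / (INR (fact r) * INR (fact q))))
    with (INR (fact (q + r)) / INR (fact q)) by (field; lra).
  destruct (fact_bounds q r) as [H1 H2].
  apply le_INR in H1, H2. rewrite mult_INR, pow_INR in H1, H2.
  rewrite plus_INR in H2.
  split.
  - apply Rmult_le_reg_l with (INR (fact q)); [lra|].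
    unfold Rdiv. rewrite <- Rmult_assoc, (Rmult_comm _ (INR (fact (q+r)))), Rmult_assoc, Rinv_r; lra.
  - apply Rmult_le_reg_l with (INR (fact q)); [lra|].
    unfold Rdiv. rewrite <- Rmult_assoc, (Rmult_comm _ (INR (fact (q+r)))), Rmult_assoc, Rinv_r; lra.
Qed.

Lemma floor_bounds (n L : nat) :
  INR (Nat.div n (2 ^ L)) * 2 ^ L <= INR n < (INR (Nat.div n (2 ^ L)) + 1) * 2 ^ L.
Proof.
  assert (Hp : (2 ^ L <> 0)%nat) by (apply Nat.pow_nonzero; lia).
  pose proof (Nat.div_mod n (2 ^ L) Hp) as Hd.
  pose proof (Nat.mod_upper_bound n (2 ^ L) Hp) as Hm.
  set (q := Nat.div n (2 ^ L)) in *. set (m := n mod 2 ^ L) in *.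
  apply lt_INR in Hm. rewrite pow_INR in Hm. simpl INR in Hm.
  rewrite Hd, plus_INR, mult_INR, pow_INR. simpl INR.
  assert (0 <= INR m) by apply pos_INR. replace (1+1) with 2 in * by ring. split; nra.
Qed.

Lemma yr_eq (r n L : nat) (P c D : R) :
  0 < P -> 0 < c -> c * (P ^ r) ^ 2 = INR n ^ r / INR (fact r) ->
  2 ^ L = P * exp ((INR L - D) * ln 2) ->
  (INR n / 2 ^ L) ^ r / INR (fact r) = c * P ^ r / exp (INR r * ((INR L - D) * ln 2)).
Proof.
  intros hP hc hPr hX.
  assert (Hf : 0 < INR (fact r)) by (apply lt_0_INR, lt_O_fact).
  assert (Hpr : 0 < P ^ r) by (apply pow_lt; lra).
  assert (He : 0 < exp (INR r * ((INR L - D) * ln 2))) by apply exp_pos.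
  replace (INR n / 2 ^ L) with (INR n * / 2 ^ L) by reflexivity. rewrite Rpow_mult_distr, pow_inv, hX, Rpow_mult_distr, exp_pow.
  assert (Hn : INR n ^ r = c * (P ^ r) ^ 2 * INR (fact r)) by (rewrite hPr; field; lra).
  rewrite Hn. field. split; lra.
Qed.

Lemma M_lower_near (r n L : nat) (P c D : R) :
  (1 <= r)%nat -> (1 <= n)%nat ->
  0 < P -> 0 < c -> c * (P ^ r) ^ 2 = INR n ^ r / INR (fact r) ->
  2 ^ L = P * exp ((INR L - D) * ln 2) ->
  INR L - D <= 1 ->
  INR r * (2 * P / INR n) <= 1 ->
  c * P ^ r / exp (INR r * ((INR L - D) * ln 2)) * (1 - INR r * (2 * P / INR n))
    <= Binomial.C (Nat.div n (2 ^ L) + r) r.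
Proof.
  intros hr hn hP hc hPr hX ht hz.
  rewrite <- (yr_eq r n L P c D hP hc hPr hX).
  assert (Hf : 0 < INR (fact r)) by (apply lt_0_INR, lt_O_fact).
  assert (HnR : 1 <= INR n) by (apply (le_INR 1); lia).
  assert (HrR : 1 <= INR r) by (apply (le_INR 1); lia).
  assert (HX0 : 0 < 2 ^ L) by (apply pow_lt; lra).
  assert (HX2 : 2 ^ L <= 2 * P).
  { rewrite hX. rewrite Rmult_comm. apply Rmult_le_compat_r; [lra|].
    rewrite <- (exp_ln 2) at 2 by lra. 
    destruct (Req_dec (INR L - D) 1) as [E|E].
    - rewrite E, Rmult_1_l. lra.
    - left. apply exp_increasing. pose proof ln_lt_2. assert (INR L - D < 1) by (destruct ht; [auto|contradiction]). nra. }
  pose proof (floor_bounds n L) as [F1 F2].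
  set (q := Nat.div n (2 ^ L)) in *.
  set (X := 2 ^ L) in *. set (y := INR n / X).
  assert (Hy : X / INR n <= 2 * P / INR n).
  { unfold Rdiv. apply Rmult_le_compat_r; [left; apply Rinv_0_lt_compat; lra | lra]. }
  assert (Hz1 : 2 * P / INR n <= 1) by nra.
  assert (Hy1 : 1 <= y).
  { unfold y. apply Rmult_le_reg_r with X; [lra|]. unfold Rdiv.
    rewrite Rmult_assoc, Rinv_l by lra. 
    assert (X <= INR n).
    { apply Rmult_le_reg_r with (/ INR n); [apply Rinv_0_lt_compat; lra|].
      rewrite Rinv_r by lra. exact (Rle_trans _ _ _ Hy Hz1). }
    lra. }
  assert (Hq : y - 1 <= INR q).
  { unfold y. apply Rmult_le_reg_r with X; [lra|]. unfold Rdiv.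
    rewrite Rmult_minus_distr_r, Rmult_assoc, Rinv_l by lra. lra. }
  assert (Hinv : / y = X / INR n) by (unfold y; field; lra).
  destruct (M_bounds r q) as [B1 _].
  assert (H1 : (y - 1) ^ r <= INR q ^ r) by (apply pow_incr; lra).
  assert (H2 : (y - 1) ^ r = y ^ r * (1 - / y) ^ r).
  { rewrite <- Rpow_mult_distr. f_equal. field. lra. }
  assert (H3 : 1 - INR r * / y <= (1 - / y) ^ r).
  { apply bern_low. split; [left; apply Rinv_0_lt_compat; lra|].
    rewrite <- Rinv_1. apply Rinv_le_contravar; lra. }
  assert (H4 : 1 - INR r * (2 * P / INR n) <= 1 - INR r * / y).
  { rewrite Hinv. nra. }
  assert (Hyr : 0 <= y ^ r) by (apply pow_le; lra).
  assert (y ^ r * (1 - INR r * (2 * P / INR n)) <= INR (fact r) * Binomial.C (q + r) r).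
  { apply Rle_trans with (y ^ r * (1 - / y) ^ r); [|lra].
    apply Rmult_le_compat_l; lra. }
  apply Rmult_le_reg_l with (INR (fact r)); [lra|].
  replace (INR (fact r) * (y ^ r / INR (fact r) * (1 - INR r * (2 * P / INR n))))
    with (y ^ r * (1 - INR r * (2 * P / INR n))) by (field; lra).
  exact H.
Qed.

Lemma M_upper_near (r n L : nat) (P c D : R) :
  (1 <= r)%nat -> (1 <= n)%nat ->
  0 < P -> 0 < c -> c * (P ^ r) ^ 2 = INR n ^ r / INR (fact r) ->
  2 ^ L = P * exp ((INR L - D) * ln 2) ->
  INR L - D <= 1 ->
  INR r * INR r * (2 * P / INR n) <= 1 ->
  Binomial.C (Nat.div n (2 ^ L) + r) r <=
  c * P ^ r / exp (INR r * ((INR L - D) * ln 2)) * (1 + INR r * INR r * (2 * P / INR n) * 2 ^ r).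
Proof.
  intros hr hn hP hc hPr hX ht hz.
  rewrite <- (yr_eq r n L P c D hP hc hPr hX).
  assert (Hf : 0 < INR (fact r)) by (apply lt_0_INR, lt_O_fact).
  assert (HnR : 1 <= INR n) by (apply (le_INR 1); lia).
  assert (HrR : 1 <= INR r) by (apply (le_INR 1); lia).
  assert (HX0 : 0 < 2 ^ L) by (apply pow_lt; lra).
  assert (HX2 : 2 ^ L <= 2 * P).
  { rewrite hX. rewrite Rmult_comm. apply Rmult_le_compat_r; [lra|].
    rewrite <- (exp_ln 2) at 2 by lra. 
    destruct (Req_dec (INR L - D) 1) as [E|E].
    - rewrite E, Rmult_1_l. lra.
    - left. apply exp_increasing. pose proof ln_lt_2. assert (INR L - D < 1) by (destruct ht; [auto|contradiction]). nra. }
  pose proof (floor_bounds n L) as [F1 F2].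
  set (q := Nat.div n (2 ^ L)) in *.
  set (X := 2 ^ L) in *. set (y := INR n / X).
  set (z := 2 * P / INR n) in *.
  assert (Hy : X / INR n <= z).
  { unfold z, Rdiv. apply Rmult_le_compat_r; [left; apply Rinv_0_lt_compat; lra | lra]. }
  assert (Hz0 : 0 <= z) by (unfold z; apply Rmult_le_pos; [lra| left; apply Rinv_0_lt_compat; lra]).
  assert (Hzr : INR r * z <= 1) by nra.
  assert (Hz1 : z <= 1) by nra.
  assert (Hy0 : 0 < y) by (unfold y; apply Rdiv_lt_0_compat; lra).
  assert (Hq : INR q <= y).
  { unfold y. apply Rmult_le_reg_r with X; [lra|]. unfold Rdiv.
    rewrite Rmult_assoc, Rinv_l by lra. lra. }
  assert (Hinv : / y = X / INR n) by (unfold y; field; lra).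
  destruct (M_bounds r q) as [_ B2].
  assert (Hq0 : 0 <= INR q) by apply pos_INR.
  assert (H1 : (INR q + INR r) ^ r <= (y + INR r) ^ r) by (apply pow_incr; lra).
  assert (H2 : (y + INR r) ^ r = y ^ r * (1 + INR r * / y) ^ r).
  { rewrite <- Rpow_mult_distr. f_equal. field. lra. }
  assert (Hx0 : 0 <= INR r * / y) by (apply Rmult_le_pos; [lra| left; apply Rinv_0_lt_compat; lra]).
  assert (Hxy : INR r * / y <= INR r * z) by (rewrite Hinv; nra).
  assert (H3 : (1 + INR r * / y) ^ r <= 1 + INR r * (INR r * / y) * 2 ^ r).
  { apply bern_up; [lra|]. nra. }
  assert (H2r : 0 <= 2 ^ r) by (apply pow_le; lra).
  assert (H4 : 1 + INR r * (INR r * / y) * 2 ^ r <= 1 + INR r * INR r * z * 2 ^ r).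
  { assert (INR r * (INR r * / y) <= INR r * (INR r * z)) by nra. nra. }
  assert (Hyr : 0 <= y ^ r) by (apply pow_le; lra).
  assert (INR (fact r) * Binomial.C (q + r) r <= y ^ r * (1 + INR r * INR r * z * 2 ^ r)).
  { apply Rle_trans with (y ^ r * (1 + INR r * / y) ^ r); [lra|].
    apply Rmult_le_compat_l; lra. }
  apply Rmult_le_reg_l with (INR (fact r)); [lra|].
  replace (INR (fact r) * (y ^ r / INR (fact r) * (1 + INR r * INR r * z * 2 ^ r)))
    with (y ^ r * (1 + INR r * INR r * z * 2 ^ r)) by (field; lra).
  exact H.
Qed.

Lemma M_nonneg (r q : nat) : 0 <= Binomial.C (q + r) r.
Proof.
  destruct (M_bounds r q) as [B1 _].
  assert (Hf : 0 < INR (fact r)) by (apply lt_0_INR, lt_O_fact).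
  assert (0 <= INR q ^ r) by (apply pow_le, pos_INR).
  apply Rmult_le_reg_l with (INR (fact r)); lra.
Qed.

Definition cc (r : nat) : R := (2 ^ (r + 1) - 1) / (2 ^ r - 1).
Definition QQ (r : nat) : R := (2 ^ r - 1) / (INR (fact r) * (2 ^ (r + 1) - 1)).
Definition PP (r n : nat) : R := exp (Lstar r n * ln 2).
Definition EE (r n L : nat) : R := exp (INR r * ((INR L - Lstar r n) * ln 2)).

Lemma pow2_ge (r : nat) : (1 <= r)%nat -> 2 <= 2 ^ r.
Proof.
  intros hr. destruct r; [lia|]. simpl. assert (1 <= 2 ^ r) by (apply pow_R1_Rle; lra). lra.
Qed.

Lemma cc_facts (r : nat) : (1 <= r)%nat -> 2 <= cc r <= 3 /\ cc r * QQ r * INR (fact r) = 1 /\ 0 < QQ r.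
Proof.
  intros hr. pose proof (pow2_ge r hr) as H.
  assert (E : 2 ^ (r + 1) = 2 * 2 ^ r) by (rewrite pow_add; simpl; ring).
  assert (Hf : 0 < INR (fact r)) by (apply lt_0_INR, lt_O_fact).
  unfold cc, QQ. rewrite E. split; [|split].
  - split.
    + apply Rmult_le_reg_r with (2 ^ r - 1); [lra|]. unfold Rdiv. rewrite Rmult_assoc, Rinv_l; lra.
    + apply Rmult_le_reg_r with (2 ^ r - 1); [lra|]. unfold Rdiv. rewrite Rmult_assoc, Rinv_l; lra.
  - field. split; lra.
  - apply Rdiv_lt_0_compat; [lra|]. apply Rmult_lt_0_compat; lra.
Qed.

Lemma PP_prop (r n : nat) : (1 <= r)%nat -> (1 <= n)%nat ->
  cc r * (PP r n ^ r) ^ 2 = INR n ^ r / INR (fact r).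
Proof.
  intros hr hn. destruct (cc_facts r hr) as [_ [H1 H2]].
  assert (Hf : 0 < INR (fact r)) by (apply lt_0_INR, lt_O_fact).
  assert (HnR : 1 <= INR n) by (apply (le_INR 1); lia).
  assert (HrR : 1 <= INR r) by (apply (le_INR 1); lia).
  assert (Hl2 : 0 < ln 2) by (pose proof ln_lt_2; lra).
  unfold PP. rewrite !exp_pow.
  assert (E : INR 2 * (INR r * (Lstar r n * ln 2)) = ln (QQ r) + INR r * ln (INR n)).
  { unfold Lstar, log2. unfold QQ at 1. simpl INR.
    field. split; lra. }
  rewrite E, exp_plus, exp_ln by exact H2.
  rewrite <- exp_pow, exp_ln by lra.
  apply Rmult_eq_reg_l with (INR (fact r)); [|lra].
  replace (INR (fact r) * (cc r * (QQ r * INR n ^ r))) with ((cc r * QQ r * INR (fact r)) * INR n ^ r) by ring.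
  rewrite H1. field. lra.
Qed.

Lemma two_pow_eq (r n L : nat) : 2 ^ L = PP r n * exp ((INR L - Lstar r n) * ln 2).
Proof.
  unfold PP. rewrite <- exp_plus. rewrite <- (exp_ln 2) at 1 by lra.
  rewrite exp_pow. f_equal. ring.
Qed.

Lemma G2_eq (r n L : nat) :
  G2 n r L = cc r * PP r n ^ r * EE r n L + Binomial.C (Nat.div n (2 ^ L) + r) r
             - (cc r + INR r + 1).
Proof.
  unfold G2, M. fold (cc r).
  rewrite Nat.mul_comm, pow_mult, (two_pow_eq r n L), Rpow_mult_distr, exp_pow. unfold EE. ring.
Qed.

Lemma exp_le_mono (x y : R) : x <= y -> exp x <= exp y.
Proof. intros [H|H]; [left; apply exp_increasing; exact H | subst; lra]. Qed.

Lemma pow_lt_mono (x y : R) (k : nat) : (1 <= k)%nat -> 0 <= x < y -> x ^ k < y ^ k.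
Proof.
  intros hk [H0 H1]. induction k as [|k IH]; [lia|].
  destruct k; [simpl; lra|].
  assert (IH' : x ^ S k < y ^ S k) by (apply IH; lia).
  assert (0 <= x ^ S k) by (apply pow_le; lra).
  change (x * x ^ S k < y * y ^ S k). nra.
Qed.

Lemma nat_above (T : R) : exists N : nat, T < INR N.
Proof.
  destruct (archimed T) as [H1 _].
  destruct (Z_le_gt_dec 0 (up T)) as [Hz|Hz].
  - exists (Z.to_nat (up T)). rewrite INR_IZR_INZ, Z2Nat.id by exact Hz. lra.
  - exists 0%nat. simpl. apply Z.gt_lt in Hz. apply IZR_lt in Hz. simpl in Hz. lra.
Qed.

Definition ss (r n : nat) : R := cc r * PP r n ^ r.
Definition zz (r n : nat) : R := 2 * PP r n / INR n.
Definition Cst (r : nat) : R := cc r + INR r + 1.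
Definition R0 (r : nat) : R := INR r * INR r * 2 ^ r.

Lemma ev (r : nat) (eta sigma : R) : (2 <= r)%nat -> 0 < eta ->
  exists N : nat, forall n : nat, (N <= n)%nat ->
    (1 <= n)%nat /\ zz r n <= eta /\ sigma <= ss r n /\ 1 <= PP r n.
Proof.
  intros hr heta.
  assert (hr1 : (1 <= r)%nat) by lia.
  destruct (cc_facts r hr1) as [[Hc1 Hc2] [HcQ HQ]].
  assert (Hf : 0 < INR (fact r)) by (apply lt_0_INR, lt_O_fact).
  assert (HrR : 1 <= INR r) by (apply (le_INR 1); lia).
  set (a := (eta / 2) ^ r).
  assert (Ha : 0 < a) by (apply pow_lt; lra).
  destruct (nat_above (1 + QQ r / (a * a) + sigma * sigma * INR (fact r) / cc r + / QQ r)) as [N HN].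
  exists N. intros n hn.
  apply le_INR in hn.
  assert (T1 : 0 <= QQ r / (a * a)) by (apply Rmult_le_pos; [lra| left; apply Rinv_0_lt_compat; nra]).
  assert (T2 : 0 <= sigma * sigma * INR (fact r) / cc r).
  { apply Rmult_le_pos; [| left; apply Rinv_0_lt_compat; lra]. apply Rmult_le_pos; nra. }
  assert (T3 : 0 < / QQ r) by (apply Rinv_0_lt_compat; lra).
  assert (Hn1 : 1 < INR n) by lra.
  assert (hn1 : (1 <= n)%nat) by (change 1 with (INR 1) in Hn1; apply INR_lt in Hn1; lia).
  assert (HP := PP_prop r n hr1 hn1).
  assert (HPQ : (PP r n ^ r) ^ 2 = QQ r * INR n ^ r).
  { apply Rmult_eq_reg_l with (cc r); [|lra]. rewrite HP.
    replace (cc r * (QQ r * INR n ^ r)) with ((cc r * QQ r * INR (fact r)) * INR n ^ r / INR (fact r)) by (field; lra).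
    rewrite HcQ. field. lra. }
  assert (Hnr : INR n <= INR n ^ r).
  { destruct r; [lia|]. simpl. assert (1 <= INR n ^ r) by (apply pow_R1_Rle; lra). nra. }
  assert (HPpos : 0 < PP r n) by apply exp_pos.
  assert (HPr : 0 < PP r n ^ r) by (apply pow_lt; lra).
  split; [exact hn1|]. split; [|split].
  - unfold zz. apply Rmult_le_reg_r with (INR n); [lra|].
    unfold Rdiv. rewrite Rmult_assoc, Rinv_l, Rmult_1_r by lra.
    apply Rnot_lt_le. intro Hc.
    assert (Hlt : (eta * INR n / 2) ^ r < PP r n ^ r).
    { apply pow_lt_mono; [lia|]. split; [apply Rmult_le_pos; nra|lra]. }
    assert (E : (eta * INR n / 2) ^ r = a * INR n ^ r).
    { unfold a. rewrite <- Rpow_mult_distr. f_equal. field. }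
    rewrite E in Hlt.
    assert (0 < a * INR n ^ r) by (apply Rmult_lt_0_compat; lra).
    assert (Hsq : (a * INR n ^ r) ^ 2 < QQ r * INR n ^ r) by (rewrite <- HPQ; apply pow_lt_mono; [lia|lra]).
    assert (Hq : QQ r / (a * a) < INR n) by lra.
    assert (QQ r < a * a * INR n).
    { apply Rmult_lt_reg_r with (/ (a * a)); [apply Rinv_0_lt_compat; nra|].
      replace (a * a * INR n * / (a * a)) with (INR n) by (field; lra). exact Hq. }
    assert (a * a * INR n * INR n ^ r <= a * a * INR n ^ r * INR n ^ r).
    { assert (0 <= a * a * INR n ^ r) by (apply Rmult_le_pos; [nra| lra]). nra. }
    nra.
  - unfold ss.
    assert (Hs2 : (cc r * PP r n ^ r) ^ 2 = cc r * INR n ^ r / INR (fact r)).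
    { rewrite Rpow_mult_distr, HPQ. replace (cc r ^ 2 * (QQ r * INR n ^ r)) with
        ((cc r * QQ r * INR (fact r)) * cc r * INR n ^ r / INR (fact r)) by (field; lra).
      rewrite HcQ. field. lra. }
    assert (H0 : 0 < cc r * PP r n ^ r) by nra.
    destruct (Rle_lt_dec sigma 0) as [Hs|Hs]; [lra|].
    apply Rnot_lt_le. intro Hc.
    assert (Hsq : (cc r * PP r n ^ r) ^ 2 < sigma * sigma) by nra.
    rewrite Hs2 in Hsq.
    assert (sigma * sigma * INR (fact r) / cc r < INR n) by lra.
    assert (sigma * sigma * INR (fact r) < cc r * INR n).
    { apply Rmult_lt_reg_r with (/ cc r); [apply Rinv_0_lt_compat; lra|].
      replace (cc r * INR n * / cc r) with (INR n) by (field; lra). exact H. }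
    assert (sigma * sigma < cc r * INR n ^ r / INR (fact r)).
    { apply Rmult_lt_reg_r with (INR (fact r)); [lra|].
      replace (cc r * INR n ^ r / INR (fact r) * INR (fact r)) with (cc r * INR n ^ r) by (field; lra).
      nra. }
    lra.
  - apply Rnot_lt_le. intro Hc.
    assert (PP r n ^ r < 1 ^ r) by (apply pow_lt_mono; [lia|lra]).
    rewrite pow1 in H.
    assert ((PP r n ^ r) ^ 2 < 1 ^ 2) by (apply pow_lt_mono; [lia|lra]).
    rewrite pow1, HPQ in H0.
    assert (/ QQ r < INR n) by lra.
    assert (1 < QQ r * INR n).
    { apply Rmult_lt_reg_l with (/ QQ r); [lra|]. rewrite <- Rmult_assoc, Rinv_l by lra. lra. }
    nra.
Qed.

Lemma perL (r n L : nat) : (2 <= r)%nat -> (1 <= n)%nat -> R0 r * zz r n <= / 4 ->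
  ss r n * EE r n L - Cst r <= G2 n r L /\
  (INR L - Lstar r n <= 1 ->
     ss r n * (1 - INR r * zz r n) * (EE r n L + / EE r n L) - Cst r <= G2 n r L /\
     G2 n r L <= ss r n * (EE r n L + / EE r n L + R0 r * zz r n / EE r n L) - Cst r).
Proof.
  intros hr hn hz.
  assert (hr1 : (1 <= r)%nat) by lia.
  destruct (cc_facts r hr1) as [[Hc1 Hc2] [HcQ HQ]].
  assert (HrR : 1 <= INR r) by (apply (le_INR 1); lia).
  assert (HnR : 1 <= INR n) by (apply (le_INR 1); lia).
  assert (HPpos : 0 < PP r n) by apply exp_pos.
  assert (HPr : 0 < PP r n ^ r) by (apply pow_lt; lra).
  assert (Hs : 0 < ss r n) by (unfold ss; nra).
  assert (He : 0 < EE r n L) by apply exp_pos.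
  assert (Hz0 : 0 <= zz r n) by (unfold zz; apply Rmult_le_pos; [lra| left; apply Rinv_0_lt_compat; lra]).
  assert (H2r : 1 <= 2 ^ r) by (apply pow_R1_Rle; lra).
  assert (Hrr : INR r * INR r * zz r n <= R0 r * zz r n).
  { unfold R0. apply Rmult_le_compat_r; [lra|]. nra. }
  assert (0 <= INR r * zz r n) by nra.
  assert (Hrz : INR r * zz r n <= INR r * INR r * zz r n) by nra.
  rewrite G2_eq. fold (ss r n). fold (Cst r).
  pose proof (M_nonneg r (Nat.div n (2 ^ L))).
  split; [lra|]. intro ht.
  pose proof (PP_prop r n hr1 hn) as HP.
  pose proof (two_pow_eq r n L) as HX.
  assert (Hc0 : 0 < cc r) by lra.
  pose proof (M_lower_near r n L (PP r n) (cc r) (Lstar r n) hr1 hn HPpos Hc0 HP HX ht) as Ml.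
  pose proof (M_upper_near r n L (PP r n) (cc r) (Lstar r n) hr1 hn HPpos Hc0 HP HX ht) as Mu.
  fold (EE r n L) in Ml, Mu. fold (ss r n) in Ml, Mu. fold (zz r n) in Ml, Mu.
  assert (Ml' := Ml ltac:(lra)). assert (Mu' := Mu ltac:(lra)).
  split.
  - assert (ss r n / EE r n L * (1 - INR r * zz r n) = ss r n * (1 - INR r * zz r n) * / EE r n L) by (field; lra).
    assert (ss r n * (1 - INR r * zz r n) * EE r n L <= ss r n * EE r n L).
    { assert (0 <= ss r n * EE r n L * (INR r * zz r n)) by (apply Rmult_le_pos; nra). nra. }
    nra.
  - assert (ss r n / EE r n L * (1 + INR r * INR r * zz r n * 2 ^ r) = ss r n * (/ EE r n L + R0 r * zz r n / EE r n L)) by (unfold R0; field; lra).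
    nra.
Qed.

Definition bb (r : nat) : R := exp (INR r * ln 2 / 2).

Lemma bb_facts (r : nat) : (2 <= r)%nat -> bb r * bb r = 2 ^ r /\ 2 <= bb r /\ sqrt (2 ^ r) = bb r.
Proof.
  intros hr.
  assert (E : bb r * bb r = 2 ^ r).
  { unfold bb. rewrite <- exp_plus.
    assert (E2 : 2 ^ r = exp (INR r * ln 2)) by (rewrite <- exp_pow, exp_ln; lra).
    rewrite E2. f_equal. field. }
  assert (Hb : 0 < bb r) by apply exp_pos.
  assert (H4 : 4 <= 2 ^ r).
  { replace 4 with (2 ^ 2) by (simpl; ring). apply Rle_pow; [lra|lia]. }
  split; [exact E|]. split; [nra|].
  rewrite <- E. apply sqrt_square. lra.
Qed.

Lemma EE_bounds (r n L : nat) (x : R) : (2 <= r)%nat ->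
  (x <= INR L - Lstar r n -> exp (INR r * (x * ln 2)) <= EE r n L) /\
  (INR L - Lstar r n <= x -> EE r n L <= exp (INR r * (x * ln 2))).
Proof.
  intros hr. assert (Hl2 : 0 < ln 2) by (pose proof ln_lt_2; lra).
  assert (HrR : 0 <= INR r) by apply pos_INR.
  unfold EE. split; intro H; apply exp_le_mono; apply Rmult_le_compat_l; nra.
Qed.

Lemma L0_exists (r n : nat) : 1 <= PP r n -> exists L0 : nat,
  Lstar r n - / 2 <= INR L0 <= Lstar r n + / 2.
Proof.
  intros H. assert (Hl2 : 0 < ln 2) by (pose proof ln_lt_2; lra).
  assert (HD : 0 <= Lstar r n).
  { unfold PP in H. rewrite <- exp_0 in H.
    destruct (Rle_lt_dec 0 (Lstar r n)) as [h|h]; [exact h|].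
    exfalso. assert (exp (Lstar r n * ln 2) < exp 0) by (apply exp_increasing; nra). lra. }
  destruct (archimed (Lstar r n - / 2)) as [H1 H2].
  assert (Hz : (0 <= up (Lstar r n - / 2))%Z).
  { apply le_IZR. assert (IZR (-1) < IZR (up (Lstar r n - / 2))) by (simpl; lra).
    apply lt_IZR in H0. apply IZR_le. lia. }
  exists (Z.to_nat (up (Lstar r n - / 2))).
  rewrite INR_IZR_INZ, Z2Nat.id by exact Hz. lra.
Qed.

Lemma K_eq (r n : nat) : (2 <= r)%nat -> (1 <= n)%nat ->
  K r * Rpower (INR n) (INR r / 2) = 2 * ss r n.
Proof.
  intros hr hn. assert (hr1 : (1 <= r)%nat) by lia.
  destruct (cc_facts r hr1) as [[Hc1 Hc2] [HcQ HQ]].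
  assert (Hf : 0 < INR (fact r)) by (apply lt_0_INR, lt_O_fact).
  assert (HnR : 1 <= INR n) by (apply (le_INR 1); lia).
  pose proof (PP_prop r n hr1 hn) as HP.
  assert (HPpos : 0 < PP r n) by apply exp_pos.
  assert (HPr : 0 < PP r n ^ r) by (apply pow_lt; lra).
  assert (Hs : 0 < ss r n) by (unfold ss; nra).
  assert (Hk : 0 <= 4 * cc r * / INR (fact r)).
  { apply Rmult_le_pos; [lra| left; apply Rinv_0_lt_compat; lra]. }
  assert (HK : K r = sqrt (4 * cc r * / INR (fact r))) by reflexivity.
  assert (Hrp : 0 < Rpower (INR n) (INR r / 2)) by apply exp_pos.
  assert (Hrp2 : Rpower (INR n) (INR r / 2) * Rpower (INR n) (INR r / 2) = INR n ^ r).
  { unfold Rpower. rewrite <- exp_plus.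
    assert (E2 : INR n ^ r = exp (INR r * ln (INR n))) by (rewrite <- exp_pow, exp_ln; lra).
    rewrite E2. f_equal. field. }
  assert (HK0 : 0 <= K r) by (rewrite HK; apply sqrt_pos).
  assert (HK2 : K r * K r = 4 * cc r * / INR (fact r)) by (rewrite HK; apply sqrt_sqrt; exact Hk).
  apply Rsqr_inj; [apply Rmult_le_pos; lra | lra |].
  unfold Rsqr.
  replace (K r * Rpower (INR n) (INR r / 2) * (K r * Rpower (INR n) (INR r / 2))) with
    ((K r * K r) * (Rpower (INR n) (INR r / 2) * Rpower (INR n) (INR r / 2))) by ring.
  rewrite HK2, Hrp2. unfold ss.
  replace (2 * (cc r * PP r n ^ r) * (2 * (cc r * PP r n ^ r))) with (4 * cc r * (cc r * (PP r n ^ r) ^ 2)) by ring.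
  rewrite HP. field. lra.
Qed.

Lemma inv_sum_le (u e : R) : 0 < u -> / u <= e <= u -> e + / e <= u + / u.
Proof.
  intros hu [h1 h2]. assert (hui : 0 < / u) by (apply Rinv_0_lt_compat; lra).
  assert (he : 0 < e) by lra.
  assert (E1 : u * / u = 1) by (field; lra). assert (E2 : e * / e = 1) by (field; lra).
  assert (hei : 0 < / e) by (apply Rinv_0_lt_compat; lra).
  assert ((e - u) * (e - / u) <= 0) by nra.
  assert (e * e + 1 <= (u + / u) * e) by nra.
  assert ((e + / e) * e <= (u + / u) * e) by nra.
  nra.
Qed.

Lemma inv_sum_ge (u e : R) : 1 <= u -> 0 < e -> (u <= e \/ e <= / u) -> u + / u <= e + / e.
Proof.
  intros hu he h. assert (hui : 0 < / u) by (apply Rinv_0_lt_compat; lra).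
  assert (E1 : u * / u = 1) by (field; lra). assert (E2 : e * / e = 1) by (field; lra).
  assert (hei : 0 < / e) by (apply Rinv_0_lt_compat; lra).
  assert (/ u <= u) by nra.
  assert ((e - u) * (e - / u) >= 0) by (destruct h; nra).
  assert ((u + / u) * e <= e * e + 1) by nra.
  assert ((u + / u) * e <= (e + / e) * e) by nra.
  nra.
Qed.

Lemma two_le_inv_sum (e : R) : 0 < e -> 2 <= e + / e.
Proof.
  intros he. assert (E2 : e * / e = 1) by (field; lra).
  assert (hei : 0 < / e) by (apply Rinv_0_lt_compat; lra).
  assert (2 * e <= (e + / e) * e).
  { replace ((e + / e) * e) with (e * e + e * / e) by ring. rewrite E2. pose proof (Rle_0_sqr (e - 1)). unfold Rsqr in *. lra. }
  apply Rmult_le_reg_r with e; lra.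
Qed.

Lemma R0_ge (r : nat) : (2 <= r)%nat -> INR r <= R0 r /\ 1 <= R0 r.
Proof.
  intros hr. assert (HrR : 1 <= INR r) by (apply (le_INR 1); lia).
  assert (H2r : 1 <= 2 ^ r) by (apply pow_R1_Rle; lra).
  unfold R0. assert (INR r <= INR r * INR r) by nra.
  assert (INR r * INR r <= INR r * INR r * 2 ^ r) by (assert (0 <= INR r * INR r) by nra; nra).
  lra.
Qed.

Lemma EE_pos (r n L : nat) : 0 < EE r n L.
Proof. apply exp_pos. Qed.

Lemma e_half (r : nat) : exp (INR r * (/ 2 * ln 2)) = bb r /\ exp (INR r * (- / 2 * ln 2)) = / bb r.
Proof.
  unfold bb. split.
  - f_equal. field.
  - rewrite <- exp_Ropp. f_equal. field.
Qed.

Lemma part2 (r : nat) (hr : (2 <= r)%nat) (Lop : nat -> nat)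
  (hLop : forall n : nat, (1 <= n)%nat -> is_Lop n r (Lop n)) :
  exists N : nat, forall n : nat, (N <= n)%nat ->
      / sqrt (2 ^ r) * K r * Rpower (INR n) (INR r / 2) < G2 n r (Lop n) /\
      G2 n r (Lop n) < sqrt (2 ^ r) * K r * Rpower (INR n) (INR r / 2).
Proof.
  destruct (bb_facts r hr) as [Hbb [Hb2 Hsq]].
  destruct (R0_ge r hr) as [HR0r HR01].
  assert (hr1 : (1 <= r)%nat) by lia.
  destruct (cc_facts r hr1) as [[Hc1 Hc2] _].
  assert (HrR : 1 <= INR r) by (apply (le_INR 1); lia).
  assert (HC : 0 < Cst r) by (unfold Cst; lra).
  destruct (ev r (/ 4 / R0 r) (2 * Cst r + 1) hr) as [N HN].
  { apply Rdiv_lt_0_compat; lra. }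
  exists N. intros n hn. destruct (HN n hn) as [hn1 [hz [hs hP]]].
  assert (Hz0 : 0 <= zz r n).
  { unfold zz. apply Rmult_le_pos; [ pose proof (exp_pos (Lstar r n * ln 2)); unfold PP; lra
    | left; apply Rinv_0_lt_compat; apply (lt_INR 0); lia]. }
  assert (hz' : R0 r * zz r n <= / 4).
  { apply Rmult_le_compat_l with (r := R0 r) in hz; [|lra].
    replace (R0 r * (/ 4 / R0 r)) with (/ 4) in hz by (field; lra). exact hz. }
  rewrite Hsq, Rmult_assoc, Rmult_assoc, (K_eq r n hr hn1).
  destruct (L0_exists r n hP) as [L0 HL0].
  destruct (perL r n L0 hr hn1 hz') as [_ H0].
  destruct (H0 ltac:(lra)) as [_ Hup0].
  destruct (e_half r) as [Eh1 Eh2].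
  destruct (EE_bounds r n L0 (- / 2) hr) as [Ea _].
  destruct (EE_bounds r n L0 (/ 2) hr) as [_ Eb].
  rewrite Eh2 in Ea. rewrite Eh1 in Eb.
  specialize (Ea ltac:(lra)). specialize (Eb ltac:(lra)).
  set (e0 := EE r n L0) in *. set (s := ss r n) in *. set (b := bb r) in *. set (z := zz r n) in *.
  assert (He0 : 0 < e0) by apply EE_pos.
  assert (Hbp : 0 < b) by lra.
  pose proof (inv_sum_le b e0 Hbp (conj Ea Eb)) as Hs1.
  assert (Hie0 : / e0 <= b).
  { rewrite <- (Rinv_inv b). apply Rinv_le_contravar; [apply Rinv_0_lt_compat; lra|lra]. }
  assert (Hs0 : 0 <= s) by lra.
  assert (HR0z : 0 <= R0 r * z) by nra.
  assert (Hrz : R0 r * z / e0 <= / 4 * b).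
  { unfold Rdiv. apply Rmult_le_compat; try lra. left; apply Rinv_0_lt_compat; lra. }
  assert (Hib : / b <= / 2) by (apply Rinv_le_contravar; lra).
  assert (Hib0 : 0 < / b) by (apply Rinv_0_lt_compat; lra).
  assert (HLo := hLop n hn1 L0).
  assert (Hup : G2 n r (Lop n) < b * (2 * s)).
  { assert (e0 + / e0 + R0 r * z / e0 <= b + / b + / 4 * b) by lra.
    assert (s * (e0 + / e0 + R0 r * z / e0) <= s * (b + / b + / 4 * b)) by (apply Rmult_le_compat_l; lra).
    assert (s * (b + / b + / 4 * b) <= b * (2 * s)) by nra.
    lra. }
  split; [|exact Hup].
  assert (Hlow : s < G2 n r (Lop n)).
  { destruct (perL r n (Lop n) hr hn1 hz') as [Hl1 Hl2].
    assert (HeL := EE_pos r n (Lop n)).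
    destruct (Rle_lt_dec (INR (Lop n) - Lstar r n) 1) as [ht|ht].
    - destruct (Hl2 ht) as [Hl _].
      fold s z in Hl.
      assert (HrzL : INR r * z <= / 4) by nra.
      pose proof (two_le_inv_sum _ HeL).
      assert (s * (1 - INR r * z) * (EE r n (Lop n) + / EE r n (Lop n)) >= s * (3 / 4) * 2).
      { apply Rle_ge. apply Rmult_le_compat; try nra. }
      lra.
    - destruct (EE_bounds r n (Lop n) 1 hr) as [Ec _].
      specialize (Ec ltac:(lra)).
      assert (exp (INR r * (1 * ln 2)) = b * b) by (unfold b, bb; rewrite <- exp_plus; f_equal; field).
      fold s in Hl1. nra. }
  assert (/ b * (2 * s) <= s).
  { assert (/ b * 2 <= 1) by lra. nra. }
  lra.
Qed.

Lemma part1 (r : nat) (hr : (2 <= r)%nat) (Lop : nat -> nat)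
  (hLop : forall n : nat, (1 <= n)%nat -> is_Lop n r (Lop n)) :
  exists delta : nat -> R,
      Un_cv delta 0 /\
      forall n : nat, (1 <= n)%nat ->
        Lstar r n - / 2 - delta n <= INR (Lop n) <= Lstar r n + / 2 + delta n.
Proof.
  exists (fun n => Rmax 0 (Rabs (INR (Lop n) - Lstar r n) - / 2)).
  split.
  2:{ intros n _. pose proof (Rmax_r 0 (Rabs (INR (Lop n) - Lstar r n) - / 2)).
      pose proof (Rle_abs (INR (Lop n) - Lstar r n)).
      pose proof (Rle_abs (- (INR (Lop n) - Lstar r n))). rewrite Rabs_Ropp in H1. lra. }
  intros eps heps.
  destruct (bb_facts r hr) as [Hbb [Hb2 Hsq]].
  destruct (R0_ge r hr) as [HR0r HR01].
  assert (hr1 : (1 <= r)%nat) by lia.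
  destruct (cc_facts r hr1) as [[Hc1 Hc2] _].
  assert (HrR : 1 <= INR r) by (apply (le_INR 1); lia).
  assert (Hln2 : 0 < ln 2) by (pose proof ln_lt_2; lra).
  set (ep := eps / 2).
  set (g := exp (INR r * (ep * ln 2))).
  assert (Hg : 1 < g).
  { unfold g. rewrite <- exp_0. apply exp_increasing. unfold ep. apply Rmult_lt_0_compat; [lra|]. nra. }
  set (b := bb r) in *.
  set (u := b * g).
  assert (Hu : b < u) by (unfold u; nra).
  assert (Hbp : 0 < b) by lra.
  assert (Hib0 : 0 < / b) by (apply Rinv_0_lt_compat; lra).
  assert (Hiu0 : 0 < / u) by (apply Rinv_0_lt_compat; lra).
  set (Phi := u + / u). set (Psi := b + / b).
  assert (HD : Psi < Phi).
  { unfold Phi, Psi. assert (E1 : b * / b = 1) by (field; lra). assert (E2 : u * / u = 1) by (field; lra).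
    assert (/ u < / b) by (apply Rinv_lt_contravar; nra).
    assert (/ u * / b <= / 2 * / 2).
    { apply Rmult_le_compat; try lra; apply Rinv_le_contravar; lra. }
    assert ((u - b) * (1 - / u * / b) > 0) by (apply Rmult_gt_0_compat; lra).
    assert ((u - b) * (1 - / u * / b) = u + / u - (b + / b)).
    { field. lra. }
    lra. }
  set (Delta := Phi - Psi).
  assert (HPhi : 0 < Phi) by (unfold Phi; lra).
  set (m := Rmin (/ 4) (Rmin (Delta / (4 * Phi)) (Delta / (4 * b)))).
  assert (Hm : 0 < m).
  { unfold m. apply Rmin_pos; [lra|]. apply Rmin_pos; apply Rdiv_lt_0_compat; unfold Delta; lra. }
  assert (Hm1 : m <= / 4) by apply Rmin_l.
  assert (Hm2 : m * Phi <= Delta / 4).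
  { assert (m <= Delta / (4 * Phi)) by (eapply Rle_trans; [apply Rmin_r|apply Rmin_l]).
    apply Rmult_le_compat_r with (r := Phi) in H; [|lra].
    replace (Delta / (4 * Phi) * Phi) with (Delta / 4) in H by (field; lra). exact H. }
  assert (Hm3 : m * b <= Delta / 4).
  { assert (m <= Delta / (4 * b)) by (eapply Rle_trans; [apply Rmin_r|apply Rmin_r]).
    apply Rmult_le_compat_r with (r := b) in H; [|lra].
    replace (Delta / (4 * b) * b) with (Delta / 4) in H by (field; lra). exact H. }
  destruct (ev r (m / R0 r) 0 hr) as [N HN].
  { apply Rdiv_lt_0_compat; lra. }
  exists N. intros n hn. destruct (HN n hn) as [hn1 [hz [hs hP]]].
  assert (Hz0 : 0 <= zz r n).
  { unfold zz. apply Rmult_le_pos; [ pose proof (exp_pos (Lstar r n * ln 2)); unfold PP; lra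
    | left; apply Rinv_0_lt_compat; apply (lt_INR 0); lia]. }
  assert (hzm : R0 r * zz r n <= m).
  { apply Rmult_le_compat_l with (r := R0 r) in hz; [|lra].
    replace (R0 r * (m / R0 r)) with m in hz by (field; lra). exact hz. }
  assert (hz' : R0 r * zz r n <= / 4) by lra.
  assert (Key : Rabs (INR (Lop n) - Lstar r n) <= / 2 + ep).
  { apply Rnot_lt_le. intro Hc.
    destruct (L0_exists r n hP) as [L0 HL0].
    destruct (perL r n L0 hr hn1 hz') as [_ H0].
    destruct (H0 ltac:(lra)) as [_ Hup0].
    destruct (e_half r) as [Eh1 Eh2].
    destruct (EE_bounds r n L0 (- / 2) hr) as [Ea _].
    destruct (EE_bounds r n L0 (/ 2) hr) as [_ Eb].
    rewrite Eh2 in Ea. rewrite Eh1 in Eb. fold b in Ea, Eb.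
    specialize (Ea ltac:(lra)). specialize (Eb ltac:(lra)).
    set (e0 := EE r n L0) in *. set (s := ss r n) in *. set (z := zz r n) in *.
    assert (He0 : 0 < e0) by apply EE_pos.
    pose proof (inv_sum_le b e0 Hbp (conj Ea Eb)) as Hs1.
    assert (Hie0 : / e0 <= b).
    { rewrite <- (Rinv_inv b). apply Rinv_le_contravar; [apply Rinv_0_lt_compat; lra|lra]. }
    assert (Hs0 : 0 < s).
    { unfold s, ss. pose proof (exp_pos (Lstar r n * ln 2)). fold (PP r n) in H.
      assert (0 < PP r n ^ r) by (apply pow_lt; lra). nra. }
    assert (HR0z : 0 <= R0 r * z) by nra.
    assert (Hrz : R0 r * z / e0 <= m * b).
    { unfold Rdiv. apply Rmult_le_compat; try lra. left; apply Rinv_0_lt_compat; lra. }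
    assert (HLo := hLop n hn1 L0).
    assert (Hup : G2 n r L0 <= s * (Psi + m * b) - Cst r).
    { assert (e0 + / e0 + R0 r * z / e0 <= Psi + m * b) by (unfold Psi; lra).
      assert (s * (e0 + / e0 + R0 r * z / e0) <= s * (Psi + m * b)) by (apply Rmult_le_compat_l; lra).
      lra. }
    assert (Hib : / b <= / 2) by (apply Rinv_le_contravar; lra).
    destruct (perL r n (Lop n) hr hn1 hz') as [Hl1 Hl2].
    assert (HeL := EE_pos r n (Lop n)).
    set (t := INR (Lop n) - Lstar r n) in *.
    destruct (Rle_lt_dec t 1) as [ht|ht].
    - destruct (Hl2 ht) as [Hl _]. fold s z in Hl.
      assert (HrzL : INR r * z <= m) by nra.
      assert (Hout : u <= EE r n (Lop n) \/ EE r n (Lop n) <= / u).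
      { destruct (Rcase_abs t) as [Hn|Hn].
        - rewrite Rabs_left in Hc by exact Hn. right.
          destruct (EE_bounds r n (Lop n) (- (/ 2 + ep)) hr) as [_ Ec].
          fold t in Ec. specialize (Ec ltac:(lra)).
          assert (exp (INR r * (- (/ 2 + ep) * ln 2)) = / u).
          { unfold u, b, bb, g. rewrite <- exp_plus, <- exp_Ropp. f_equal. field. }
          lra.
        - rewrite Rabs_right in Hc by exact Hn. left.
          destruct (EE_bounds r n (Lop n) (/ 2 + ep) hr) as [Ec _].
          fold t in Ec. specialize (Ec ltac:(lra)).
          assert (exp (INR r * ((/ 2 + ep) * ln 2)) = u).
          { unfold u, b, bb, g. rewrite <- exp_plus. f_equal. field. }
          lra. }
      pose proof (inv_sum_ge u _ ltac:(lra) HeL Hout) as Hge. fold Phi in Hge.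
      assert (s * (1 - INR r * z) * (EE r n (Lop n) + / EE r n (Lop n)) >= s * (1 - m) * Phi).
      { apply Rle_ge. apply Rmult_le_compat; try nra. }
      assert (s * (1 - m) * Phi > s * (Psi + m * b)).
      { apply Rmult_gt_compat_l with (r := s) in HD; [|lra]. unfold Delta in *. nra. }
      lra.
    - destruct (EE_bounds r n (Lop n) 1 hr) as [Ec _].
      fold t in Ec. specialize (Ec ltac:(lra)).
      assert (exp (INR r * (1 * ln 2)) = b * b) by (unfold b, bb; rewrite <- exp_plus; f_equal; field).
      fold s in Hl1.
      assert (Psi + m * b < b * b).
      { unfold Psi. assert (m * b <= / 4 * b) by nra. nra. }
      assert (s * (Psi + m * b) < s * (b * b)) by (apply Rmult_lt_compat_l; lra).
      nra. }
  unfold R_dist. rewrite Rminus_0_r.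
  pose proof (Rmax_l 0 (Rabs (INR (Lop n) - Lstar r n) - / 2)).
  rewrite Rabs_right by lra.
  apply Rmax_lub_lt; unfold ep in Key; lra.
Qed.

Theorem theorem2 (r : nat) (hr : (2 <= r)%nat) (Lop : nat -> nat)
  (hLop : forall n : nat, (1 <= n)%nat -> is_Lop n r (Lop n)) :
  (exists delta : nat -> R,
      Un_cv delta 0 /\
      forall n : nat, (1 <= n)%nat ->
        Lstar r n - / 2 - delta n <= INR (Lop n) <= Lstar r n + / 2 + delta n)
  /\
  (exists N : nat, forall n : nat, (N <= n)%nat ->
      / sqrt (2 ^ r) * K r * Rpower (INR n) (INR r / 2) < G2 n r (Lop n) /\
      G2 n r (Lop n) < sqrt (2 ^ r) * K r * Rpower (INR n) (INR r / 2)).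
Proof. split; [apply part1 | apply part2]; assumption. Qed.
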